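(* Let $S_1,\dots,S_d$ be independent random variables with $S_j\sim\mathrm{Bin}(n,u_j)$ and $0<u_j<1$ for all $j\in\{1,\dots,d\}$, and write $\mathbf u=(u_1,\dots,u_d)$. Then for every $\delta>0$, $$P\Big\{g\big(\tfrac{S_1}n,\dots,\tfrac{S_d}n\big)\ge g(\mathbf u)(1+\delta)\Big\}\le 2d\exp\{-n\,g(\mathbf u)\,h(1+\delta)\},$$ $$P\Big\{g\big(\tfrac{S_1}n,\dots,\tfrac{S_d}n\big)\le g(\mathbf u)(1-\delta)\Big\}\le 4d\exp\{-n\,g(\mathbf u)\,h(1+\delta)\},$$ and in particular $h(1+\delta)\ge\frac13\delta^2$ for $0<\delta\le1$.
   Context: $d\ge2$; $g(\mathbf u)=\bigwedge_{j=1}^d\{u_j\wedge\bigvee_{k\ne j}(1-u_k)\}$ for $\mathbf u\in[0,1]^d$ ($\wedge$ = min, $\vee$ = max); $h(x)=x(\log x-1)+1$ for $x>0$. *)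

(* Defs.v *)
From HB Require Import structures.
From mathcomp Require Import all_boot all_order all_algebra.
From mathcomp Require Import all_classical all_reals all_analysis.
Set Implicit Arguments. Unset Strict Implicit. Unset Printing Implicit Defensive.
Import Order.TTheory GRing.Theory Num.Theory.
Local Open Scope ring_scope.

Definition gfun (R : realType) (d : nat) (u : 'I_d -> R) : R :=
  \big[Num.min/1]_(j < d)
     Num.min (u j) (\big[Num.max/0]_(k < d | k != j) (1 - u k)).

Definition hfun (R : realType) (x : R) : R := x * (ln x - 1) + 1.

Definition binpmf (R : realType) (n : nat) (p : R) (k : nat) : R :=
  ('C(n, k))%:R * p ^+ k * (1 - p) ^+ (n - k).

(* Probability that (S_1,...,S_d) lies in E, where the S_j are independent
   with S_j ~ Bin(n, u_j): sum of the joint (product) pmf over outcomes in E. *)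
Definition probBin (R : realType) (d n : nat) (u : 'I_d -> R)
  (E : pred {ffun 'I_d -> 'I_n.+1}) : R :=
  \sum_(s : {ffun 'I_d -> 'I_n.+1} | E s) \prod_(j < d) binpmf n (u j) (s j).

Definition scaled (R : realType) (d n : nat) (s : {ffun 'I_d -> 'I_n.+1}) : 'I_d -> R :=
  fun j => (nat_of_ord (s j))%:R / n%:R.
Arguments probBin {R d} n u E.
Arguments scaled {R d n} s j.

(* Main.v *)
Require Import Defs.
From HB Require Import structures.
From mathcomp Require Import all_boot all_order all_algebra.
From mathcomp Require Import all_classical all_reals all_analysis.
From mathcomp Require Import ring lra.
Import Order.TTheory GRing.Theory Num.Theory.
Import numFieldNormedType.Exports.
Local Open Scope ring_scope.

Section H.
Variable R : realType.

Lemma binsum n (a b : R) :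
  \sum_(k < n.+1) ('C(n, k))%:R * a ^+ k * b ^+ (n - k) = (a + b) ^+ n.
Proof.
rewrite addrC exprDn; apply: eq_bigr => k _.
by rewrite -mulr_natl; ring.
Qed.

Lemma binpmf_mgf n (p C X Y : R) :
  \sum_(k < n.+1) binpmf n p k * (C * X ^+ k * Y ^+ (n - k))
  = C * (p * X + (1 - p) * Y) ^+ n.
Proof.
rewrite -binsum mulr_sumr; apply: eq_bigr => k _.
rewrite /binpmf !exprMn; ring.
Qed.

Lemma binpmf_sum n (p : R) : \sum_(k < n.+1) binpmf n p k = 1.
Proof.
have := binsum n p (1 - p); rewrite [p + _]addrC subrK expr1n => <-.
by apply: eq_bigr.
Qed.

Lemma binpmf_ge0 n (p : R) k : 0 <= p <= 1 -> 0 <= binpmf n p k.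
Proof.
case/andP=> p0 p1; rewrite /binpmf.
by rewrite !mulr_ge0 // exprn_ge0 // subr_ge0.
Qed.

Lemma marg d n (w : 'I_d -> 'I_n.+1 -> R) (hw : forall j, \sum_k w j k = 1)
  j0 (F : 'I_n.+1 -> R) :
  \sum_(s : {ffun 'I_d -> 'I_n.+1}) (\prod_j w j (s j)) * F (s j0)
  = \sum_k w j0 k * F k.
Proof.
pose G j k := if j == j0 then w j k * F k else w j k.
transitivity (\sum_(s : {ffun 'I_d -> 'I_n.+1}) \prod_j G j (s j)).
  apply: eq_bigr => s _.
  rewrite (bigD1 j0) //= (bigD1 j0 (F := fun j => G j (s j))) //= /G eqxx.
  rewrite mulrAC; congr (_ * _); apply: eq_bigr => j /negbTE ->; by [].
rewrite -bigA_distr_bigA (bigD1 j0) //= [X in _ * X]big1 ?mulr1.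
  by apply: eq_bigr => k _; rewrite /G eqxx.
by move=> j /negbTE hj; rewrite /G hj hw.
Qed.

Lemma probBin_le d n (u : 'I_d -> R) (hu : forall j, 0 < u j < 1)
  (E : pred {ffun 'I_d -> 'I_n.+1}) (F : 'I_d -> 'I_n.+1 -> R) :
  (forall j k, 0 <= F j k) ->
  (forall s, E s -> 1 <= \sum_j F j (s j)) ->
  probBin n u E <= \sum_j \sum_(k < n.+1) binpmf n (u j) k * F j k.
Proof.
move=> F0 HE.
have hu' j : 0 <= u j <= 1.
  by have /andP[a b] := hu j; rewrite ltW // ltW.
rewrite /probBin.
apply: (@le_trans _ _ (\sum_(s : {ffun 'I_d -> 'I_n.+1})
          (\prod_j binpmf n (u j) (s j)) * \sum_j F j (s j))).
  rewrite [X in X <= _]big_mkcond /=; apply: ler_sum => s _.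
  have P0 : 0 <= \prod_j binpmf n (u j) (s j).
    by apply: prodr_ge0 => j _; apply: binpmf_ge0.
  case: ifP => Es; first by rewrite ler_peMr // HE.
  by rewrite mulr_ge0 // sumr_ge0.
under eq_bigr do rewrite mulr_sumr.
rewrite exchange_big /=; apply: ler_sum => j _.
by rewrite (@marg d n (fun j (k : 'I_n.+1) => binpmf n (u j) k) (fun i => binpmf_sum n (u i)) j (F j)).
Qed.

Lemma mono_aux (f df : R -> R) :
  (forall x : R, 0 < x -> is_derive x (1:R) f (df x)) ->
  (forall x : R, 1 < x -> 0 <= df x) ->
  forall x : R, 1 <= x -> f 1 <= f x.
Proof.
move=> hd hdf x hx.
have hd' : forall y, 0 < y -> derivable f y 1.
  by move=> y /hd H; apply: ex_derive.
apply: (@ger0_derive1_ndecr R f 1 x) => //.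
- move=> y; rewrite in_itv/= => /andP[y1 _].
  by apply: hd'; apply: lt_trans y1.
- move=> y; rewrite in_itv/= => /andP[y1 _].
  rewrite derive1E; have := hd y (lt_trans ltr01 y1) => H.
  by rewrite derive_val; apply: hdf.
- apply: continuous_in_subspaceT => y; rewrite inE /= in_itv /= => /andP[y1 _].
  apply: differentiable_continuous.
  apply/derivable1_diffP; apply: hd'.
  exact: lt_le_trans ltr01 y1.
Qed.

Lemma ln_upper (x : R) : 1 <= x -> ln x <= (x - x^-1) / 2.
Proof.
move=> x1.
pose f := ((id - [eta GRing.inv]) * cst (2^-1 : R) - ln (R:=R)).
have key : f 1 <= f x.
  apply: (@mono_aux f (fun x : R => 2^-1 * (1 + x ^- 2) - x^-1)).
  - move=> y y0.
    have Hid := is_derive_id y (1:R).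
    have HV := is_deriveV (f:=id) (lt0r_neq0 y0) Hid.
    have Hs := is_deriveB Hid HV.
    have Hm := is_deriveM Hs (is_derive_cst (2^-1 : R) y 1).
    have Hl := is_derive1_ln y0.
    have H := is_deriveB Hm Hl.
    apply: (is_derive_eq H).
    by rewrite scaler0 add0r /GRing.scale /= mulr1 opprK.
  - move=> y y1.
    have y0 : 0 < y by apply: lt_trans y1.
    have -> : 2^-1 * (1 + y ^- 2) - y^-1 = (1 - y^-1) ^+ 2 / 2.
      by rewrite -exprVn; field; rewrite gt_eqF.
    by rewrite divr_ge0 // sqr_ge0.
  - by [].
have fE z : f z = (z - z^-1) * 2^-1 - ln z by [].
move: key; rewrite !fE ln1 invr1 subrr mul0r subr0.
by rewrite subr_ge0 mulrC.
Qed.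

Lemma ln_lower (x : R) : 1 <= x -> 2 * (x - 1) / (x + 1) <= ln x.
Proof.
move=> x1.
have x0 : 0 < x by apply: lt_le_trans x1.
pose f := (ln (R:=R) + cst (4 : R) * (fun y => (y + 1)^-1)).
have key : f 1 <= f x.
  apply: (@mono_aux f (fun x : R => x^-1 - 4 * (x + 1) ^- 2)).
  - move=> y y0.
    have Hid := is_derive_id y (1:R).
    have Hp := is_deriveD Hid (is_derive_cst (1 : R) y 1).
    have y1 : (id + cst 1) y != 0 by rewrite /= gt_eqF // addr_gt0.
    have HV := is_deriveV y1 Hp.
    have Hm := is_deriveM (is_derive_cst (4 : R) y 1) HV.
    have Hl := is_derive1_ln y0.
    have H := is_deriveD Hl Hm.
    apply: (is_derive_eq H).
    rewrite scaler0 addr0 /GRing.scale /= addr0 mulr1.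
    by rewrite mulrN.
  - move=> y y1.
    have y0 : 0 < y by apply: lt_trans y1.
    have -> : y^-1 - 4 * (y + 1) ^- 2 = (y - 1) ^+ 2 / (y * (y + 1) ^+ 2).
      by field; rewrite ?gt_eqF // ?addr_gt0 // ?mulr_gt0 // ?exprn_gt0 // ?addr_gt0.
    apply: divr_ge0; first exact: sqr_ge0. apply: mulr_ge0; [exact: ltW | exact: sqr_ge0].
  - by [].
have fE z : f z = ln z + 4 * (z + 1)^-1 by [].
move: key; rewrite !fE ln1 add0r.
have x10 : 0 < x + 1 by rewrite addr_gt0.
have -> : 2 * (x - 1) / (x + 1) = 2 - 4 * (x + 1)^-1.
  by field; rewrite gt_eqF.
have -> : (4 / 2 : R) = 2 by field.
set a := 4 / (x + 1); set L := ln x; lra.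
Qed.

Lemma eqle (x y : R) : x = y -> x <= y.
Proof. by move->. Qed.

Lemma expR_ge1' (x : R) : 0 <= x -> 1 <= expR x.
Proof. move=> x0; apply: le_trans (expR_ge1Dx x); by rewrite lerDl. Qed.

Lemma kle n (k : 'I_n.+1) : (k <= n)%N.
Proof. by rewrite -ltnS ltn_ord. Qed.

Lemma cher_up1 n (p g δ : R) : 0 < δ -> 0 <= p -> p <= g ->
  \sum_(k < n.+1) binpmf n p k * expR (ln (1 + δ) * (k%:R - n%:R * (g * (1 + δ))))
  <= expR (- (n%:R * g * hfun (1 + δ))).
Proof.
move=> d0 p0 pg.
have d1 : 0 < 1 + δ by rewrite addr_gt0.
have eL : expR (ln (1 + δ)) = 1 + δ by rewrite lnK // posrE.
set L := ln (1 + δ).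
have -> : \sum_(k < n.+1) binpmf n p k * expR (L * (k%:R - n%:R * (g * (1 + δ))))
   = \sum_(k < n.+1) binpmf n p k * (expR (- (L * (n%:R * (g * (1 + δ))))) * (1 + δ) ^+ k * 1 ^+ (n - k)).
  apply: eq_bigr => k _; congr (_ * _).
  by rewrite expr1n mulr1 mulrBr expRD mulrC expRM_natr eL.
rewrite binpmf_mgf mulr1.
have h1 : (p * (1 + δ) + (1 - p)) ^+ n <= expR (g * δ) ^+ n.
  apply: lerXn2r; rewrite ?nnegrE ?expR_ge0 //.
    by nra.
  have -> : p * (1 + δ) + (1 - p) = 1 + p * δ by ring.
  apply: le_trans (expR_ge1Dx (p * δ)) _.
  by rewrite ler_expR ler_wpM2r // ltW.
rewrite -expRM_natl in h1.
apply: le_trans (ler_wpM2l (expR_ge0 _) h1) _.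
rewrite -expRD ler_expR /hfun -/L.
apply: eqle; ring.
Qed.

Lemma cher_up2 n (p g δ : R) : 0 < δ -> p <= 1 -> 1 - p <= g ->
  \sum_(k < n.+1) binpmf n p k * expR (ln (1 + δ) * ((n%:R - k%:R) - n%:R * (g * (1 + δ))))
  <= expR (- (n%:R * g * hfun (1 + δ))).
Proof.
move=> d0 p1 pg.
have d1 : 0 < 1 + δ by rewrite addr_gt0.
have eL : expR (ln (1 + δ)) = 1 + δ by rewrite lnK // posrE.
set L := ln (1 + δ).
have -> : \sum_(k < n.+1) binpmf n p k * expR (L * ((n%:R - k%:R) - n%:R * (g * (1 + δ))))
   = \sum_(k < n.+1) binpmf n p k * (expR (- (L * (n%:R * (g * (1 + δ))))) * 1 ^+ k * (1 + δ) ^+ (n - k)).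
  apply: eq_bigr => k _; congr (_ * _).
  by rewrite expr1n mulr1 -natrB ?kle // mulrBr expRD mulrC expRM_natr eL.
rewrite binpmf_mgf mulr1.
have h1 : (p + (1 - p) * (1 + δ)) ^+ n <= expR (g * δ) ^+ n.
  apply: lerXn2r; rewrite ?nnegrE ?expR_ge0 //.
    by nra.
  have -> : p + (1 - p) * (1 + δ) = 1 + (1 - p) * δ by ring.
  apply: le_trans (expR_ge1Dx ((1 - p) * δ)) _.
  by rewrite ler_expR ler_wpM2r // ltW.
rewrite -expRM_natl in h1.
apply: le_trans (ler_wpM2l (expR_ge0 _) h1) _.
rewrite -expRD ler_expR /hfun -/L.
apply: eqle; ring.
Qed.

Lemma cher_dn1 n (p g δ : R) : 0 < δ -> 0 <= g -> g <= p -> p <= 1 ->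
  \sum_(k < n.+1) binpmf n p k * expR (ln (1 + δ) * (n%:R * (g * (1 - δ)) - k%:R))
  <= expR (- (n%:R * g * hfun (1 + δ))).
Proof.
move=> d0 g0 gp p1.
have d1 : 0 < 1 + δ by rewrite addr_gt0.
have eL : expR (ln (1 + δ)) = 1 + δ by rewrite lnK // posrE.
have hd1 : 1 <= 1 + δ by rewrite lerDl ltW.
have hL := @ln_upper (1 + δ) hd1.
set L := ln (1 + δ) in hL *.
set z := (1 + δ)^-1 in hL *.
have z0 : 0 <= z by rewrite invr_ge0 ltW.
have z1 : z <= 1 by rewrite invr_le1 // ?unitfE ?gt_eqF // lerDl ltW.
have -> : \sum_(k < n.+1) binpmf n p k * expR (L * (n%:R * (g * (1 - δ)) - k%:R))
   = \sum_(k < n.+1) binpmf n p k * (expR (L * (n%:R * (g * (1 - δ)))) * z ^+ k * 1 ^+ (n - k)).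
  apply: eq_bigr => k _; congr (_ * _).
  by rewrite expr1n mulr1 mulrBr expRD expRN [L * _]mulrC expRM_natr eL exprVn.
rewrite binpmf_mgf mulr1.
have h1 : (p * z + (1 - p)) ^+ n <= expR (g * (z - 1)) ^+ n.
  apply: lerXn2r; rewrite ?nnegrE ?expR_ge0 //.
    by nra.
  have -> : p * z + (1 - p) = 1 + p * (z - 1) by ring.
  apply: le_trans (expR_ge1Dx (p * (z - 1))) _.
  rewrite ler_expR; nra.
rewrite -expRM_natl in h1.
apply: le_trans (ler_wpM2l (expR_ge0 _) h1) _.
rewrite -expRD ler_expR /hfun -/L -subr_ge0.
have -> : - (n%:R * g * ((1 + δ) * (L - 1) + 1)) -
    (L * (n%:R * (g * (1 - δ))) + n%:R * (g * (z - 1)))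
  = n%:R * g * ((1 + δ) - z - 2 * L) by ring.
rewrite mulr_ge0 // ?mulr_ge0 //; lra.
Qed.

Lemma cher_dn2 n (p g δ : R) : 0 < δ -> 0 <= g -> g <= 1 - p -> 0 <= p ->
  \sum_(k < n.+1) binpmf n p k * expR (ln (1 + δ) * (n%:R * (g * (1 - δ)) - (n%:R - k%:R)))
  <= expR (- (n%:R * g * hfun (1 + δ))).
Proof.
move=> d0 g0 gp p0.
have d1 : 0 < 1 + δ by rewrite addr_gt0.
have eL : expR (ln (1 + δ)) = 1 + δ by rewrite lnK // posrE.
have hd1 : 1 <= 1 + δ by rewrite lerDl ltW.
have hL := @ln_upper (1 + δ) hd1.
set L := ln (1 + δ) in hL *.
set z := (1 + δ)^-1 in hL *.
have z0 : 0 <= z by rewrite invr_ge0 ltW.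
have z1 : z <= 1 by rewrite invr_le1 // ?unitfE ?gt_eqF // lerDl ltW.
have -> : \sum_(k < n.+1) binpmf n p k * expR (L * (n%:R * (g * (1 - δ)) - (n%:R - k%:R)))
   = \sum_(k < n.+1) binpmf n p k * (expR (L * (n%:R * (g * (1 - δ)))) * 1 ^+ k * z ^+ (n - k)).
  apply: eq_bigr => k _; congr (_ * _).
  by rewrite expr1n mulr1 -natrB ?kle // mulrBr expRD expRN [L * _]mulrC expRM_natr eL exprVn.
rewrite binpmf_mgf mulr1.
have h1 : (p + (1 - p) * z) ^+ n <= expR (g * (z - 1)) ^+ n.
  apply: lerXn2r; rewrite ?nnegrE ?expR_ge0 //.
    by nra.
  have -> : p + (1 - p) * z = 1 + (1 - p) * (z - 1) by ring.
  apply: le_trans (expR_ge1Dx ((1 - p) * (z - 1))) _.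
  rewrite ler_expR; nra.
rewrite -expRM_natl in h1.
apply: le_trans (ler_wpM2l (expR_ge0 _) h1) _.
rewrite -expRD ler_expR /hfun -/L -subr_ge0.
have -> : - (n%:R * g * ((1 + δ) * (L - 1) + 1)) -
    (L * (n%:R * (g * (1 - δ))) + n%:R * (g * (z - 1)))
  = n%:R * g * ((1 + δ) - z - 2 * L) by ring.
rewrite mulr_ge0 // ?mulr_ge0 //; lra.
Qed.

Lemma h_lower (δ : R) : 0 < δ <= 1 -> δ ^+ 2 / 3 <= hfun (1 + δ).
Proof.
case/andP=> d0 d1.
have hd1 : 1 <= 1 + δ by rewrite lerDl ltW.
have hL := @ln_lower (1 + δ) hd1.
rewrite /hfun; set L := ln (1 + δ) in hL *.
have e : 2 * (1 + δ - 1) / (1 + δ + 1) = 2 * δ / (2 + δ) by congr (_ / _); ring.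
rewrite e in hL.
set q := 2 * δ / (2 + δ) in hL.
have hq : q * (2 + δ) = 2 * δ by rewrite /q mulfVK // gt_eqF // addr_gt0.
have q0 : 0 <= q by rewrite /q divr_ge0 // ?mulr_ge0 // ltW // addr_gt0.
nra.
Qed.

Lemma bigmin_le_seq (I : eqType) (r : seq I) (F : I -> R) j :
  j \in r -> \big[Num.min/1]_(i <- r) F i <= F j.
Proof.
elim: r => // a r IH; rewrite inE big_cons => /orP[/eqP ->|/IH h].
  by rewrite ge_min lexx.
by rewrite ge_min h orbT.
Qed.

Lemma bigmax_ge_seq (I : eqType) (r : seq I) (P : pred I) (F : I -> R) j :
  j \in r -> P j -> F j <= \big[Num.max/0]_(i <- r | P i) F i.
Proof.
elim: r => // a r IH; rewrite inE big_cons => /orP[/eqP <-|/IH h] Pj.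
  by rewrite Pj le_max lexx.
by case: (P a); rewrite ?le_max h ?orbT.
Qed.

Lemma bigmax_lt (I : Type) (r : seq I) (P : pred I) (F : I -> R) c :
  0 < c -> (forall i, P i -> F i < c) -> \big[Num.max/0]_(i <- r | P i) F i < c.
Proof.
move=> c0 H; apply: (big_ind (fun x => x < c)) => // x y.
by rewrite gt_max => -> ->.
Qed.

Lemma bigmin_gt (I : Type) (r : seq I) (P : pred I) (F : I -> R) c :
  c < 1 -> (forall i, P i -> c < F i) -> c < \big[Num.min/1]_(i <- r | P i) F i.
Proof.
move=> c1 H; apply: (big_ind (fun x => c < x)) => // x y.
by rewrite lt_min => -> ->.
Qed.

Lemma sum_ge1 d (f : 'I_d -> R) j : (forall i, 0 <= f i) -> 1 <= f j -> 1 <= \sum_i f i.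
Proof.
move=> f0 fj; rewrite (bigD1 j) //=.
have := @sumr_ge0 _ _ (index_enum 'I_d) (fun i => i != j) f (fun i _ => f0 i).
move: fj; set a := f j; set b := \sum_(_ < d | _) _; lra.
Qed.

End H.

Theorem lemma8 (R : realType) (d n : nat) (u : 'I_d -> R)
  (hd : (2 <= d)%N) (hn : (0 < n)%N)
  (hu : forall j, 0 < u j < 1) :
  (forall delta : R, 0 < delta ->
     probBin n u (fun s => gfun u * (1 + delta) <= gfun (scaled s))
       <= (2 * d)%:R * expR (- (n%:R * gfun u * hfun (1 + delta))))
  /\
  (forall delta : R, 0 < delta ->
     probBin n u (fun s => gfun (scaled s) <= gfun u * (1 - delta))
       <= (4 * d)%:R * expR (- (n%:R * gfun u * hfun (1 + delta))))
  /\
  (forall delta : R, 0 < delta <= 1 -> delta ^+ 2 / 3 <= hfun (1 + delta)).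
Proof.
pose M (v : 'I_d -> R) j := \big[Num.max/0]_(k < d | k != j) (1 - v k).
pose G (v : 'I_d -> R) j := Num.min (v j) (M v j).
have gE v : gfun v = \big[Num.min/1]_(j < d) G v j by [].
have gle v j : gfun v <= G v j by rewrite gE; apply: bigmin_le_seq; exact: mem_index_enum.
have Gle1 v j : G v j <= v j by rewrite /G ge_min lexx.
have Gle2 v j : G v j <= M v j by rewrite /G ge_min lexx orbT.
have Mge v j k : k != j -> 1 - v k <= M v j.
  by move=> kj; apply: (@bigmax_ge_seq R _ _ (fun k => k != j)) => //; exact: mem_index_enum.
have exG v c : c < 1 -> gfun v <= c -> exists j, G v j <= c.
  move=> c1 gc; case: (boolP [exists j, G v j <= c]) => [/existsP//|/existsPn H].
  have : c < gfun v.
    by rewrite gE; apply: bigmin_gt => // j _; rewrite ltNge H.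
  by rewrite ltNge gc.
have exM v j c : 0 < c -> c <= M v j -> exists k, (k != j) && (c <= 1 - v k).
  move=> c0 cM; case: (boolP [exists k, (k != j) && (c <= 1 - v k)]) => [/existsP//|/existsPn H].
  have : M v j < c.
    apply: bigmax_lt => // k kj; have := H k; rewrite kj /= ltNge => ->; by [].
  by rewrite ltNge cM.
have d0 : (0 < d)%N by apply: ltnW.
pose j0 : 'I_d := Ordinal d0.
pose j1 : 'I_d := Ordinal hd.
have hu0 j : 0 < u j by case/andP: (hu j).
have hu1 j : u j < 1 by case/andP: (hu j).
set g := gfun u.
have g1 : g < 1 by apply: le_lt_trans (gle u j0) _; apply: le_lt_trans (Gle1 u j0) _.
have g0 : 0 < g.
  rewrite /g gE; apply: (big_ind (fun x => 0 < x)) => //.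
    by move=> x y; rewrite lt_min => -> ->.
  move=> j _; rewrite /G lt_min hu0 /=.
  have [k kj] : exists k, k != j.
    case: (eqVneq j j0) => [->|hne]; first by exists j1.
    by exists j0; rewrite eq_sym.
  apply: lt_le_trans (Mge u j k kj); by rewrite subr_gt0.
have N0 : 0 < n%:R :> R by rewrite ltr0n.
have Nge : 0 <= n%:R :> R by rewrite ltW.
have scE (s : {ffun 'I_d -> 'I_n.+1}) j : scaled (R:=R) s j = (s j)%:R / n%:R by [].
have hup j : 0 <= u j <= 1 by rewrite !ltW.
split; [|split]; last exact: h_lower.
- move=> δ δ0.
  have hd1 : 1 <= 1 + δ by rewrite lerDl ltW.
  have L0 : 0 <= ln (1 + δ) by apply: ln_ge0.
  set L := ln (1 + δ) in L0 *.
  set B := expR _.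
  pose F (j : 'I_d) (k : 'I_n.+1) :=
    (if u j <= g then expR (L * (k%:R - n%:R * (g * (1 + δ)))) else 0) +
    (if 1 - u j <= g then expR (L * ((n%:R - k%:R) - n%:R * (g * (1 + δ)))) else 0).
  have F0 j k : 0 <= F j k by rewrite /F addr_ge0 //; case: ifP => _; rewrite ?expR_ge0.
  apply: le_trans (@probBin_le R d n u hu _ F F0 _) _.
    move=> s /= Es.
    have a0 : 0 < g * (1 + δ) by rewrite mulr_gt0 // addr_gt0.
    have [j Gj] := exG u g g1 (lexx _).
    move: Gj; rewrite /G ge_min => /orP[ujg|Mg].
      apply: (@sum_ge1 _ _ _ j) => [i|]; first exact: F0.
      rewrite /F ujg; rewrite -{1}[1]addr0; apply: lerD; last by case: ifP => _; rewrite ?expR_ge0.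
      apply: expR_ge1'; apply: mulr_ge0 => //; rewrite subr_ge0.
      have := le_trans Es (le_trans (gle _ j) (Gle1 _ j)).
      by rewrite scE ler_pdivlMr // mulrC.
    have aM : g * (1 + δ) <= M (scaled s) j := le_trans Es (le_trans (gle _ j) (Gle2 _ j)).
    have [k /andP[kj ak]] := exM _ _ _ a0 aM.
    have ukg : 1 - u k <= g := le_trans (Mge u j k kj) Mg.
    apply: (@sum_ge1 _ _ _ k) => [i|]; first exact: F0.
    rewrite /F ukg; rewrite -{1}[1]add0r; apply: lerD; first by case: ifP => _; rewrite ?expR_ge0.
    apply: expR_ge1'; apply: mulr_ge0 => //; rewrite subr_ge0.
    move: ak; rewrite scE.
    have : (s k)%:R / n%:R * n%:R = (s k)%:R :> R by rewrite mulfVK // gt_eqF.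
    set x := (s k)%:R / n%:R; set y := (s k)%:R; move=> hxy hx.
    nra.
  apply: (@le_trans _ _ (\sum_(j < d) (B + B))).
    apply: ler_sum => j _; rewrite /F.
    under eq_bigr do rewrite mulrDr.
    rewrite big_split /=; apply: lerD.
      case: (boolP (u j <= g)) => h; rewrite ?h ?(negbTE h) /=; first by apply: (@cher_up1 R n (u j) g δ) => //; case/andP: (hup j).
      by rewrite big1 ?expR_ge0 // => k _; rewrite mulr0.
    case: (boolP (1 - u j <= g)) => h; rewrite ?h ?(negbTE h) /=; first by apply: (@cher_up2 R n (u j) g δ) => //; case/andP: (hup j).
    by rewrite big1 ?expR_ge0 // => k _; rewrite mulr0.
  rewrite sumr_const card_ord -mulr2n -mulrnA mulr_natl mulnC.
  by [].
- move=> δ δ0.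
  have hd1 : 1 <= 1 + δ by rewrite lerDl ltW.
  have L0 : 0 <= ln (1 + δ) by apply: ln_ge0.
  set L := ln (1 + δ) in L0 *.
  set B := expR _.
  pose F (j : 'I_d) (k : 'I_n.+1) :=
    (if g <= u j then expR (L * (n%:R * (g * (1 - δ)) - k%:R)) else 0) +
    (if g <= 1 - u j then expR (L * (n%:R * (g * (1 - δ)) - (n%:R - k%:R))) else 0).
  have F0 j k : 0 <= F j k by rewrite /F addr_ge0 //; case: ifP => _; rewrite ?expR_ge0.
  apply: le_trans (@probBin_le R d n u hu _ F F0 _) _.
    move=> s /= Es.
    have c1 : g * (1 - δ) < 1.
      have : 0 < g * δ by rewrite mulr_gt0.
      move: g1; set gd := g * δ; rewrite mulrBr mulr1 -/gd; lra.
    have [j Gj] := exG _ _ c1 Es.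
    move: Gj; rewrite /G ge_min => /orP[vjc|Mc].
      have gu : g <= u j := le_trans (gle u j) (Gle1 u j).
      apply: (@sum_ge1 _ _ _ j) => [i|]; first exact: F0.
      rewrite /F gu; rewrite -{1}[1]addr0; apply: lerD; last by case: ifP => _; rewrite ?expR_ge0.
      apply: expR_ge1'; apply: mulr_ge0 => //; rewrite subr_ge0.
      by move: vjc; rewrite scE ler_pdivrMr // mulrC.
    have gM : g <= M u j := le_trans (gle u j) (Gle2 u j).
    have [k /andP[kj gk]] := exM _ _ _ g0 gM.
    have vk : 1 - scaled s k <= g * (1 - δ) := le_trans (Mge _ j k kj) Mc.
    apply: (@sum_ge1 _ _ _ k) => [i|]; first exact: F0.
    rewrite /F gk; rewrite -{1}[1]add0r; apply: lerD; first by case: ifP => _; rewrite ?expR_ge0.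
    apply: expR_ge1'; apply: mulr_ge0 => //; rewrite subr_ge0.
    move: vk; rewrite scE.
    have : (s k)%:R / n%:R * n%:R = (s k)%:R :> R by rewrite mulfVK // gt_eqF.
    set x := (s k)%:R / n%:R; set y := (s k)%:R; set c := g * (1 - δ); move=> hxy hx.
    nra.
  apply: (@le_trans _ _ (\sum_(j < d) (B + B))).
    apply: ler_sum => j _; rewrite /F.
    under eq_bigr do rewrite mulrDr.
    rewrite big_split /=; apply: lerD.
      case: (boolP (g <= u j)) => h; rewrite ?h ?(negbTE h) /=; first by apply: (@cher_dn1 R n (u j) g δ) => //; [exact: ltW | case/andP: (hup j)].
      by rewrite big1 ?expR_ge0 // => k _; rewrite mulr0.
    case: (boolP (g <= 1 - u j)) => h; rewrite ?h ?(negbTE h) /=; first by apply: (@cher_dn2 R n (u j) g δ) => //; [exact: ltW | case/andP: (hup j)].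
    by rewrite big1 ?expR_ge0 // => k _; rewrite mulr0.
  rewrite sumr_const card_ord -mulr2n -mulrnA -[X in X <= _]mulr_natl.
  apply: ler_wpM2r; first exact: expR_ge0.
  by rewrite ler_nat leq_mul2r orbT.
Qed.
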